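(* Let $p,q\ge2$ and $m\ge3$ be integers with $p=q$ whenever $m$ is odd. Define $c=-\cos(\pi/m)$ and $\alpha=-\left(\frac{\cos(\pi/p-\pi/q)+\cos(2\pi/m)}{2\sin(\pi/p)\sin(\pi/q)}\right)^{1/2}$. Then $\alpha\le c$. *)

(* Defs.v *)
From Stdlib Require Export Reals.

(* Main.v *)
Require Import Defs.
From Stdlib Require Import Reals Lra Lia.
Open Scope R_scope.

Lemma angle_facts (n : nat) (hn : (2 <= n)%nat) :
  0 < sin (PI / INR n) <= 1 /\ 0 <= cos (PI / INR n) /\
  sin (PI / INR n) ^ 2 + cos (PI / INR n) ^ 2 = 1.
Proof.
  assert (Hn : 2 <= INR n) by (replace 2 with (INR 2) by (simpl; lra); apply le_INR; lia).
  assert (HP := PI_RGT_0).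
  assert (H1 : 0 < PI / INR n) by (apply Rdiv_lt_0_compat; lra).
  assert (H2 : PI / INR n <= PI / 2).
  { apply Rmult_le_compat_l; [lra|]. apply Rinv_le_contravar; lra. }
  repeat split.
  - apply sin_gt_0; lra.
  - apply (proj2 (SIN_bound _)).
  - apply cos_ge_0; lra.
  - pose proof (sin2_cos2 (PI / INR n)). unfold Rsqr in H. nra.
Qed.

Theorem lemma2p4 (p q m : nat)
  (hp : (2 <= p)%nat) (hq : (2 <= q)%nat) (hm : (3 <= m)%nat)
  (hodd : Nat.odd m = true -> p = q) :
  let c := - cos (PI / INR m) in
  let alpha := - sqrt ((cos (PI / INR p - PI / INR q) + cos (2 * PI / INR m))
                       / (2 * sin (PI / INR p) * sin (PI / INR q))) in
  alpha <= c.
Proof.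
  intros c alpha. unfold c, alpha.
  set (t := PI / INR m).
  assert (Hm : 3 <= INR m) by (replace 3 with (INR 3) by (simpl; lra); apply le_INR; lia).
  assert (HP := PI_RGT_0).
  assert (Ht0 : 0 < t) by (apply Rdiv_lt_0_compat; lra).
  assert (Ht1 : t <= PI / 3).
  { apply Rmult_le_compat_l; [lra|]. apply Rinv_le_contravar; lra. }
  assert (Hc : 0 < cos t) by (apply cos_gt_0; lra).
  assert (E2 : 2 * PI / INR m = 2 * t) by (unfold t; field; lra).
  rewrite E2, cos_2a_cos, cos_minus.
  destruct (angle_facts p hp) as [[sa1 sa2] [ca sa]].
  destruct (angle_facts q hq) as [[sb1 sb2] [cb sb]].
  set (A := sin (PI / INR p)) in *. set (B := sin (PI / INR q)) in *.
  set (CA := cos (PI / INR p)) in *. set (CB := cos (PI / INR q)) in *.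
  apply Ropp_le_contravar.
  apply Rle_trans with (sqrt (cos t ^ 2)); [right; symmetry; apply sqrt_pow2; lra|].
  apply sqrt_le_1_alt.
  apply Rmult_le_reg_r with (2 * A * B); [nra|].
  unfold Rdiv. rewrite (Rmult_assoc _ (/ (2 * A * B))), (Rinv_l (2 * A * B)) by nra. rewrite Rmult_1_r.
  destruct (Nat.odd m) eqn:Hodd.
  - specialize (hodd eq_refl). subst q.
    subst B CB. fold A CA.
    assert (0 <= cos t ^ 2 * CA ^ 2) by (apply Rmult_le_pos; apply pow2_ge_0).
    nra.
  - assert (Hev : Nat.even m = true) by (rewrite <- Nat.negb_odd, Hodd; reflexivity).
    apply Nat.even_spec in Hev. destruct Hev as [k Hk].
    assert (H4 : 4 <= INR m) by (replace 4 with (INR 4) by (simpl; lra); apply le_INR; lia).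
    assert (Ht2 : t <= PI / 4).
    { apply Rmult_le_compat_l; [lra|]. apply Rinv_le_contravar; lra. }
    assert (HC2 : 0 <= cos (2 * t)) by (apply cos_ge_0; lra).
    rewrite cos_2a_cos in HC2.
    assert (0 <= 1 - A * B) by nra.
    assert (0 <= CA * CB) by nra.
    nra.
Qed.
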